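(* Let $k\geq 3$ and let $p$ be the POP of length $k$ defined by the single relation $1>k$ (labels $2,\ldots,k-1$ isolated). Then for every $n\geq 0$, the number of $n$-permutations avoiding $p$ equals the number of $n$-permutations $\sigma$ such that, for every cycle $c$ of $\sigma$ (in its disjoint cycle decomposition), $\max(c)-\min(c)\leq k-2$, i.e. the smallest integer interval containing all elements of $c$ has at most $k-1$ elements.
   Context: An $n$-permutation is a word $\pi=\pi_1\cdots\pi_n$ containing each of $1,\ldots,n$ exactly once (equivalently a bijection of $\{1,\ldots,n\}$, which has a decomposition into disjoint cycles). A partially ordered pattern (POP) $p$ of length $k$ is a partial order on the label set $\{1,\ldots,k\}$; it is described by a set of generating relations, where a relation $x>y$ means that in an occurrence the entry in the $x$-th chosen position must be larger than the entry in the $y$-th chosen position, and labels not involved in any relation are unconstrained. An $n$-permutation $\pi$ contains $p$ if there are indices $1\leq i_1<\cdots<i_k\leq n$ such that $\pi_{i_x}>\pi_{i_y}$ whenever $x>y$ in the partial order; otherwise $\pi$ avoids $p$. *)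

(* Defs.v *)
From mathcomp Require Import all_boot all_fingroup.
Set Implicit Arguments. Unset Strict Implicit. Unset Printing Implicit Defensive.

(* A POP of length k is given by a list of generating relations (x, y) with
   x y : 'I_k, meaning "x > y" (labels are 0-based here: label i+1 of the paper
   is the ordinal i). *)
Definition pop (k : nat) := seq ('I_k * 'I_k).

(* pi contains p : there are indices i_1 < ... < i_k (a strictly increasing
   map f : 'I_k -> 'I_n) such that pi(i_x) > pi(i_y) for every relation x > y.
   (Satisfying the generating relations is equivalent to satisfying their
   transitive closure.) *)
Definition contains (n k : nat) (s : 'S_n) (p : pop k) : bool :=
  [exists f : {ffun 'I_k -> 'I_n},
     [forall x : 'I_k, forall y : 'I_k, (x < y)%N ==> (f x < f y)%N] &&
     all (fun r => (s (f r.1) > s (f r.2))%N) p].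

Definition avoids (n k : nat) (s : 'S_n) (p : pop k) : bool := ~~ contains s p.

Definition pop_first_gt_last (k : nat) : pop k.+3 := [:: (ord0, ord_max)].

Definition cycle_max (n : nat) (s : 'S_n) (x : 'I_n) : nat :=
  \max_(y in porbit s x) (y : nat).
Definition cycle_min (n : nat) (s : 'S_n) (x : 'I_n) : nat :=
  \big[minn/(x : nat)]_(y in porbit s x) (y : nat).

Definition cycles_spread_le (n : nat) (s : 'S_n) (d : nat) : bool :=
  [forall x : 'I_n, cycle_max s x - cycle_min s x <= d].

(* Main.v *)
Require Import Defs.
From mathcomp Require Import all_boot all_fingroup zify.
Set Implicit Arguments. Unset Strict Implicit. Unset Printing Implicit Defensive.

Definition st n (t : 'S_n) (i : 'I_n) : 'I_n := [arg max_(j > i | j <= i) (t j : nat)].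

Lemma st_le n (t : 'S_n) (i : 'I_n) : st t i <= i.
Proof. by rewrite /st; case: arg_maxnP. Qed.

Lemma st_max n (t : 'S_n) (i j : 'I_n) : j <= i -> t j <= t (st t i).
Proof. by rewrite /st; case: arg_maxnP => // k _ H /H. Qed.

Lemma st_char n (t : 'S_n) (i j : 'I_n) : j <= i -> (forall k : 'I_n, k <= i -> t k <= t j) -> st t i = j.
Proof.
move=> ji H; apply: (@perm_inj _ t); apply: val_inj; apply/eqP.
by rewrite eqn_leq st_max // H // st_le.
Qed.

Definition sc n (i : 'I_n) : 'I_n := insubd i i.+1.

Lemma val_sc n (i : 'I_n) : i.+1 < n -> val (sc i) = i.+1.
Proof. by move=> h; rewrite /sc val_insubd h. Qed.

Definition nx n (t : 'S_n) (i : 'I_n) : 'I_n :=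
  if (i.+1 < n) && (t (sc i) < t (st t i)) then sc i else st t i.

Lemma nx_inj n (t : 'S_n) : injective (nx t).
Proof.
have key: forall i j : 'I_n, (i.+1 < n) && (t (sc i) < t (st t i)) -> sc i = st t j -> False.
  move=> i j /andP[h1 h2] e.
  have hj : sc i <= j by rewrite e st_le.
  have : t (st t i) <= t (st t j).
    apply: st_max; apply: leq_trans (st_le t i) _.
    by move: hj; rewrite val_sc // => /ltnW.
  by rewrite -e leqNgt h2.
have key2: forall i j : 'I_n, i < j -> ~~ ((i.+1 < n) && (t (sc i) < t (st t i))) -> st t i = st t j -> False.
  move=> i j ij h e.
  have h1 : i.+1 < n by apply: leq_ltn_trans ij (ltn_ord j).
  move: h; rewrite h1 /= -leqNgt leq_eqVlt => /orP[/eqP|] h.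
    have := st_le t i; rewrite (perm_inj (val_inj h)) val_sc //.
    by rewrite ltnn.
  have : t (sc i) <= t (st t j) by apply: st_max; rewrite val_sc.
  by rewrite -e leqNgt h.
move=> i j; rewrite /nx.
case: ifP => hi; case: ifP => hj.
- move=> e; apply: val_inj; apply/eqP; rewrite -eqSS.
  by move: hi hj => /andP[a _] /andP[b _]; rewrite -(val_sc a) -(val_sc b) e.
- by move=> e; case: (key _ _ hi e).
- by move=> e; case: (key _ _ hj (esym e)).
- move=> e; case: (ltngtP i j) => h.
  + by case: (key2 _ _ h (negbT hi) e).
  + by case: (key2 _ _ h (negbT hj) (esym e)).
  + exact: val_inj.
Qed.

Lemma st_idem n (t : 'S_n) i : st t (st t i) = st t i.
Proof. apply: st_char => // k hk; apply: st_max; exact: leq_trans hk (st_le t i). Qed.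

Lemma st_nx n (t : 'S_n) i : st t (nx t i) = st t i.
Proof.
rewrite /nx; case: ifP => [/andP[h1 h2]|_]; last exact: st_idem.
apply: st_char; first by rewrite val_sc // (leq_trans (st_le t i)).
move=> k; rewrite val_sc // leq_eqVlt => /orP[/eqP e|hk].
  have -> : k = sc i by apply: val_inj; rewrite /= val_sc.
  exact: ltnW.
exact: st_max.
Qed.

Definition nxp n (t : 'S_n) : 'S_n := perm (@nx_inj n t).

Lemma porbit_step (T : finType) (s : {perm T}) x y : x \in porbit s y -> s x \in porbit s y.
Proof.
move/porbitP=> [i ->]; apply/porbitP; exists i.+1.
by rewrite !permX.
Qed.

Lemma st_iter n (t : 'S_n) k i : st t ((nxp t ^+ k)%g i) = st t i.
Proof.
elim: k => [|k IH]; first by rewrite expg0 perm1.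
by rewrite permX /= -permX /nxp permE st_nx.
Qed.

Lemma reach n (t : 'S_n) (j : 'I_n) : j \in porbit (nxp t) (st t j).
Proof.
move: {2}(nat_of_ord j) (leqnn (nat_of_ord j)) => m; elim: m j => [|m IH] j hj.
  have -> : st t j = j by apply: val_inj; apply/eqP; rewrite eqn_leq st_le /=; move: hj; rewrite leqn0 => /eqP ->.
  exact: porbit_id.
case: (eqVneq (st t j) j) => [->|ne]; first exact: porbit_id.
have lt : st t j < j by rewrite ltn_neqAle st_le andbT val_eqE.
have j0 : 0 < nat_of_ord j by lia.
have hjn : j.-1 < n by apply: leq_ltn_trans (ltn_ord j); lia.
pose j' : 'I_n := Ordinal hjn.
have ej' : st t j' = st t j.
  apply: st_char => /=; first lia.
  move=> k hk; apply: st_max; lia.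
have hn : j'.+1 < n by rewrite /= prednK.
have esc : sc j' = j by apply: val_inj; rewrite val_sc //= prednK.
have hnx : nxp t j' = j.
  rewrite /nxp permE /nx hn esc ej' /=.
  have : t j <= t (st t j) by apply: st_max.
  rewrite leq_eqVlt => /orP[/eqP /val_inj /perm_inj e|->//].
  by rewrite -e eqxx in ne.
rewrite -{1}hnx -ej'; apply: porbit_step; apply: IH => /=; lia.
Qed.

Lemma block_porbit n (t : 'S_n) (i j : 'I_n) : (j \in porbit (nxp t) i) = (st t j == st t i).
Proof.
apply/idP/eqP.
  by move/porbitP => [k ->]; rewrite st_iter.
move=> e.
have hi : porbit (nxp t) i = porbit (nxp t) (st t i) by apply/eqP; rewrite eq_porbit_mem reach.
by rewrite hi -e reach.
Qed.

Definition Psi n (t : 'S_n) : 'S_n := (nxp t) ^ t.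

Lemma psi_porbit n (t : 'S_n) (i j : 'I_n) : (t j \in porbit (Psi t) (t i)) = (st t j == st t i).
Proof.
rewrite -block_porbit; apply/porbitP/porbitP => [[k e]|[k ->]]; exists k.
  by move: e; rewrite /Psi -conjXg permJ => /perm_inj.
by rewrite /Psi -conjXg permJ.
Qed.

Lemma bigmin_le (T : finType) (A : {set T}) (F : T -> nat) x0 y :
  y \in A -> \big[minn/x0]_(z in A) F z <= F y.
Proof.
move=> yA.
have gen : forall r : seq T, y \in r -> \big[minn/x0]_(z <- r | z \in A) F z <= F y.
  elim=> [//|a r IH]; rewrite inE big_cons => /orP[/eqP <-|yr].
    by rewrite yA geq_minl.
  case: ifP => _; last exact: IH.
  by rewrite geq_min IH ?orbT.
by apply: gen; rewrite mem_index_enum.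
Qed.

Lemma bigmin_ge (T : finType) (A : {set T}) (F : T -> nat) x0 c :
  c <= x0 -> (forall z, z \in A -> c <= F z) -> c <= \big[minn/x0]_(z in A) F z.
Proof.
move=> h0 h; elim/big_ind: _ => //.
by move=> a b ha hb; rewrite leq_min ha hb.
Qed.

Lemma psi_porbit' n (t : 'S_n) (i : 'I_n) y :
  (y \in porbit (Psi t) (t i)) = (st t (t^-1 y)%g == st t i).
Proof. by rewrite -psi_porbit permKV. Qed.

Lemma cmax n (t : 'S_n) i : cycle_max (Psi t) (t i) = t (st t i).
Proof.
apply/eqP; rewrite eqn_leq; apply/andP; split.
  apply/bigmax_leqP => y; rewrite psi_porbit' => /eqP e.
  rewrite -{1}(permKV t y) -e; exact: st_max.
by apply: (bigmax_sup (t (st t i))) => //; rewrite psi_porbit st_idem.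
Qed.

Definition Pd n (t : 'S_n) d := [forall b, t (st t b) <= t b + d].

Lemma B_iff n (t : 'S_n) d : cycles_spread_le (Psi t) d = Pd t d.
Proof.
apply/forallP/forallP => H b.
  have := H (t b); rewrite cmax => h.
  have : cycle_min (Psi t) (t b) <= t b.
    by apply: bigmin_le; rewrite psi_porbit.
  move: h; lia.
rewrite -(permKV t b) cmax.
set i := (t^-1 b)%g.
have : t (st t i) - d <= cycle_min (Psi t) (t i).
  apply: bigmin_ge; first by have := H i; lia.
  move=> z; rewrite psi_porbit' => /eqP e.
  have := H (t^-1 z)%g; rewrite e permKV; lia.
lia.
Qed.

Lemma psi_nx n (t : 'S_n) j : Psi t (t j) = t (nxp t j).
Proof. by rewrite /Psi permJ. Qed.

Lemma nx_cases n (t : 'S_n) j : nxp t j = st t j \/ (nat_of_ord (nxp t j) = j.+1).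
Proof.
rewrite /nxp permE /nx; case: ifP => [/andP[h _]|_]; last by left.
by right; rewrite val_sc.
Qed.

Lemma prev_step n (t : 'S_n) (j : 'I_n) : st t j != j ->
  exists j' : 'I_n, (j'.+1 = j) /\ nxp t j' = j /\ st t j' = st t j.
Proof.
move=> ne.
have lt : st t j < j by rewrite ltn_neqAle st_le andbT val_eqE.
have j0 : 0 < nat_of_ord j by lia.
have hjn : j.-1 < n by apply: leq_ltn_trans (ltn_ord j); lia.
pose j' : 'I_n := Ordinal hjn.
have ej' : st t j' = st t j.
  apply: st_char => /=; first lia.
  move=> k hk; apply: st_max; lia.
have hn : j'.+1 < n by rewrite /= prednK.
have esc : sc j' = j by apply: val_inj; rewrite val_sc //= prednK.
exists j'; split; first by rewrite /= prednK.
split=> //.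
rewrite /nxp permE /nx hn esc ej' /=.
have : t j <= t (st t j) by apply: st_max.
rewrite leq_eqVlt => /orP[/eqP /val_inj /perm_inj e|->//].
by rewrite -e eqxx in ne.
Qed.

Lemma stepA n (t1 t2 : 'S_n) (i : 'I_n) : Psi t1 = Psi t2 ->
  (forall j : 'I_n, j < i -> t1 j = t2 j) -> st t1 i != i -> t1 i = t2 i.
Proof.
move=> E ag ne; have [j' [e1 [e2 _]]] := prev_step ne.
have hj' : j' < i by lia.
have h : t1 i = t2 (nxp t2 j') by rewrite -{1}e2 -psi_nx E ag // psi_nx.
case: (nx_cases t2 j') => [e3|e3].
  have hs : st t2 j' < i by have := st_le t2 j'; lia.
  move: h; rewrite e3 -ag // => /perm_inj e; move: hs; rewrite -e ltnn //.
have e4 : nxp t2 j' = i by apply: val_inj; rewrite /= e3.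
by rewrite h e4.
Qed.

Lemma stepC n (t1 t2 : 'S_n) (i : 'I_n) : Psi t1 = Psi t2 ->
  (forall j : 'I_n, j < i -> t1 j = t2 j) -> st t1 i = i -> t2 i <= t1 i.
Proof.
move=> E ag si.
set y := t1 i; set j := (t2^-1 y)%g.
have ey : t2 j = y by rewrite /j permKV.
have ij : i <= j.
  rewrite leqNgt; apply/negP => h.
  have := ag j h; rewrite ey /y => /perm_inj e.
  by move: h; rewrite e ltnn.
have c1 : cycle_max (Psi t1) y = t1 i by rewrite /y cmax si.
have c2 : cycle_max (Psi t2) y = t2 (st t2 j) by rewrite -ey cmax.
rewrite -c1 E c2; exact: st_max.
Qed.

Lemma Psi_inj n : injective (@Psi n).
Proof.
move=> t1 t2 E; apply/permP => i.
move: {2}(nat_of_ord i) (leqnn (nat_of_ord i)) => m.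
elim: m i => [|m IH] i hi.
- have ag : forall j : 'I_n, j < i -> t1 j = t2 j by move=> j hj; exfalso; lia.
  have ag' : forall j : 'I_n, j < i -> t2 j = t1 j by move=> j hj; exfalso; lia.
  have s1 : st t1 i = i by apply: val_inj => /=; have := st_le t1 i; lia.
  have s2 : st t2 i = i by apply: val_inj => /=; have := st_le t2 i; lia.
  apply: val_inj; apply/eqP; rewrite eqn_leq (stepC E) // andbT.
  exact: (stepC (esym E)).
- have ag : forall j : 'I_n, j < i -> t1 j = t2 j by move=> j hj; apply: IH; lia.
  have ag' : forall j : 'I_n, j < i -> t2 j = t1 j by move=> j hj; rewrite ag.
  case: (eqVneq (st t1 i) i) => s1; last exact: stepA.
  case: (eqVneq (st t2 i) i) => s2; last exact/esym/(stepA (esym E)).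
  apply: val_inj; apply/eqP; rewrite eqn_leq (stepC E) // andbT.
  exact: (stepC (esym E)).
Qed.

Definition Qd n (s : 'S_n) d :=
  [forall i : 'I_n, forall j : 'I_n, ((i < j) && (s j < s i)) ==> (j <= i + d)].

Lemma incr_bound m n (f : {ffun 'I_m.+3 -> 'I_n}) :
  [forall x : 'I_m.+3, forall y : 'I_m.+3, (x < y)%N ==> (f x < f y)%N] ->
  forall k, k <= m.+2 -> f ord0 + k <= f (inord k).
Proof.
move=> /forallP H; elim=> [|k IH] hk.
  by rewrite addn0 (_ : inord 0 = ord0) //; apply: val_inj; rewrite /= inordK.
have := IH (ltnW hk).
have : f (inord k) < f (inord k.+1).
  move: (H (inord k)) => /forallP /(_ (inord k.+1)) /implyP; apply.
  by rewrite !inordK //; apply: ltnW.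
lia.
Qed.

Lemma avoids_iff m n (s : 'S_n) : avoids s (pop_first_gt_last m) = Qd s m.+1.
Proof.
rewrite /avoids /contains; apply/idP/idP.
  move=> /existsPn H; apply/forallP => i; apply/forallP => j; apply/implyP => /andP[ij sji].
  rewrite leqNgt; apply/negP => big.
  have hi : forall x : 'I_m.+3, i + x < n.
    move=> x; have := ltn_ord x; have := ltn_ord j; lia.
  pose f := [ffun x : 'I_m.+3 => if x == ord_max then j else insubd i (i + x)].
  have fv : forall x : 'I_m.+3, x != ord_max -> nat_of_ord (f x) = i + x.
    by move=> x hx; rewrite ffunE (negbTE hx) val_insubd hi.
  apply: (negP (H f)); apply/andP; split.
    apply/forallP => x; apply/forallP => y; apply/implyP => xy.
    have hx : x != ord_max.
      apply/eqP => e; move: xy; rewrite e; have := ltn_ord y; rewrite /=; lia.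
    rewrite fv //.
    case: (eqVneq y ord_max) => [->|hy]; last by rewrite fv //; lia.
    rewrite ffunE eqxx; have := ltn_ord x; move: hx; rewrite -val_eqE /=; lia.
  rewrite /= andbT.
  have -> : f ord0 = i by apply: val_inj; rewrite /= fv //=; lia.
  by rewrite ffunE eqxx.
move=> /forallP H; apply/existsPn => f; apply/negP => /andP[inc].
rewrite /= andbT => lt.
have := incr_bound inc (leqnn _).
have -> : inord m.+2 = ord_max :> 'I_m.+3 by apply: val_inj; rewrite /= inordK.
move=> hb.
have := H (f ord0) => /forallP /(_ (f ord_max)) /implyP.
have l1 : f ord0 < f ord_max by apply: leq_trans hb; rewrite -addn1 leq_add2l.
rewrite l1 lt => /(_ isT) h.
by have := leq_trans hb h; rewrite leq_add2l ltnn.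
Qed.

Lemma QP n (t : 'S_n) d : Qd (t^-1)%g d = Pd t d.
Proof.
apply/idP/idP.
  move=> /forallP H; apply/forallP => b.
  case: (eqVneq (st t b) b) => [->|ne]; first by rewrite leq_addr.
  have lt : st t b < b by rewrite ltn_neqAle st_le andbT val_eqE.
  have le : t b <= t (st t b) by apply: st_max.
  have lt2 : t b < t (st t b).
    rewrite ltn_neqAle le andbT val_eqE; apply/eqP => /perm_inj e.
    by rewrite -e eqxx in ne.
  have := H (t b) => /forallP /(_ (t (st t b))) /implyP.
  by rewrite !permK lt2 lt => /(_ isT).
move=> /forallP H; apply/forallP => i; apply/forallP => j; apply/implyP => /andP[ij sji].
set a := (t^-1 j)%g in sji; set c := (t^-1 i)%g in sji.
have hi : i = t c by rewrite /c permKV.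
have hj : j = t a by rewrite /a permKV.
rewrite hi hj in ij *.
have h1 : t a <= t (st t c) by apply: st_max; apply: ltnW.
exact: leq_trans h1 (H c).
Qed.

Theorem theorem2p7 (m n : nat) :
  #|[set s : 'S_n | avoids s (pop_first_gt_last m)]| =
  #|[set s : 'S_n | cycles_spread_le s (m.+3 - 2)]|.
Proof.
have -> : m.+3 - 2 = m.+1 by lia.
have e1 : [set s : 'S_n | avoids s (pop_first_gt_last m)] = [set s : 'S_n | Qd s m.+1].
  by apply/setP => s; rewrite !inE avoids_iff.
have e2 : [set t : 'S_n | Pd t m.+1] = (@invg _) @^-1: [set s : 'S_n | Qd s m.+1].
  by apply/setP => t; rewrite !inE QP.
have e3 : [set t : 'S_n | Pd t m.+1] = (@Psi n) @^-1: [set s : 'S_n | cycles_spread_le s m.+1].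
  by apply/setP => t; rewrite !inE B_iff.
rewrite e1 -(card_preimset _ (@invg_inj _)) -e2 e3 card_preimset //.
exact: Psi_inj.
Qed.
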